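(* Let $R_1,R_2,S_1,S_2\in\mathfrak{P}$. If $R_1\sqsubseteq_\Gamma S_1$ and $R_2\sqsubseteq_\Gamma S_2$ with respect to $\mathfrak{P}$, then $R_1\oplus R_2\sqsubseteq_\Gamma S_1\oplus S_2$ with respect to $\mathfrak{P}$. Here $\oplus$ denotes the ordinal sum of posets, in which every element of the first summand is placed below every element of the second.
   Context: **Digraphs and homomorphisms.** - A digraph $G$ is a pair $(V(G),A(G))$, where $V(G)$ is a finite non-empty set and $A(G)\subseteq V(G)\times V(G)$. Arcs are written $vw$. - $\mathfrak{P}$ is the class of finite posets, i.e. reflexive, antisymmetric, transitive digraphs. - A homomorphism $\xi:G\to H$ is a map $V(G)\to V(H)$ with $\xi(v)\xi(w)\in A(H)$ for all $vw\in A(G)$. $\mathcal{H}(G,H)$ is the set of homomorphisms. **Connectivity.** - Two vertices $u,w$ are adjacent if $uw\in A(G)$ or $wu\in A(G)$. - For $X\subseteq V(G)$ and $v,w\in X$, the vertices $v$ and $w$ are connected in $X$ if $v=w$, or if there are $z_0=v,\dots,z_I=w$ in $X$ with consecutive terms adjacent. - $\gamma_X(v)$ is the set of such $w$. - $\Gamma_\xi(v)=\gamma_{\xi^{-1}(\xi(v))}(v)$. **Schemes.** - $\mathfrak{P}_r$ is a fixed system of representatives of $\mathfrak{P}$ up to isomorphism. - $R\sqsubseteq_\Gamma S$ with respect to $\mathfrak{P}$ means there exist injective maps $\rho_G:\mathcal{H}(G,R)\to\mathcal{H}(G,S)$, $G\in\mathfrak{P}_r$, with $\Gamma_{\rho_G(\xi)}(v)=\Gamma_\xi(v)$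 for all $G\in\mathfrak{P}_r$, $\xi\in\mathcal{H}(G,R)$ and $v\in V(G)$. *)

(* Defs.v *)
From mathcomp Require Import all_boot.
Set Implicit Arguments. Unset Strict Implicit. Unset Printing Implicit Defensive.

Record digraph := Digraph { vert : finType; arc : rel vert }.
Arguments arc : clear implicits.

Definition is_poset (G : digraph) : Prop :=
  [/\ 0 < #|{: vert G}|, reflexive (arc G), antisymmetric (arc G) & transitive (arc G)].

Definition is_hom (G H : digraph) (xi : vert G -> vert H) : Prop :=
  forall v w, arc G v w -> arc H (xi v) (xi w).

Definition adjacent (G : digraph) (u w : vert G) : bool := arc G u w || arc G w u.

Definition gamma (G : digraph) (X : {set vert G}) (v : vert G) : {set vert G} :=
  [set w | (v \in X) &&
     connect [rel a b | [&& a \in X, b \in X & adjacent a b]] v w].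

Definition Gamma (G H : digraph) (xi : vert G -> vert H) (v : vert G) : {set vert G} :=
  gamma [set u | xi u == xi v] v.

Arguments is_hom : clear implicits.

(* R [=_Gamma S with respect to the class of finite posets.  The family of
   injections rho_G indexed by a system of representatives is rendered as: for
   every finite poset G there is such an injection. *)
Definition sqsubGamma (R S : digraph) : Prop :=
  forall G : digraph, is_poset G ->
  exists rho : (vert G -> vert R) -> (vert G -> vert S),
    [/\ forall xi, is_hom G R xi -> is_hom G S (rho xi),
        forall xi1 xi2, is_hom G R xi1 -> is_hom G R xi2 ->
          rho xi1 =1 rho xi2 -> xi1 =1 xi2
      & forall xi, is_hom G R xi -> forall v, Gamma (rho xi) v = Gamma xi v].

Definition ordsum_arc (R1 R2 : digraph) (x y : (vert R1 + vert R2)%type) : bool :=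
  match x, y with
  | inl a, inl b => arc R1 a b
  | inr a, inr b => arc R2 a b
  | inl _, inr _ => true
  | inr _, inl _ => false
  end.

Definition ordsum (R1 R2 : digraph) : digraph :=
  @Digraph (vert R1 + vert R2)%type (ordsum_arc (R1:=R1) (R2:=R2)).

(* Main.v *)
Require Import Defs.
From mathcomp Require Import all_boot.
From Stdlib Require Import ClassicalEpsilon.
Import Defs.
Set Implicit Arguments. Unset Strict Implicit. Unset Printing Implicit Defensive.

Definition subG (G : digraph) (A : {set vert G}) : digraph :=
  @Digraph {x : vert G | x \in A} (fun x y => arc G (val x) (val y)).

Lemma exsub (G : digraph) (A : {set vert G}) v : v \in A ->
  exists x : vert (subG A), v = val x.
Proof. by move=> Hv; exists (Sub v Hv : {x : vert G | x \in A}); rewrite SubK. Qed.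

Lemma subG_poset (G : digraph) (A : {set vert G}) (x : vert (subG A)) :
  is_poset G -> is_poset (subG A).
Proof.
case=> _ Hr Ha Ht; split.
- by apply/card_gt0P; exists x.
- by move=> y; apply: Hr.
- by move=> y z H; apply: val_inj; apply: Ha.
- by move=> y z w; apply: Ht.
Qed.

Lemma gamma_sub (G : digraph) (A X : {set vert G}) (Y : {set vert (subG A)})
  (x : vert (subG A)) :
  X \subset A -> (forall y : vert (subG A), (val y \in X) = (y \in Y)) ->
  forall w, (w \in gamma X (val x)) = (w \in A) && (insubd x w \in gamma Y x).
Proof.
move=> /subsetP XA HY w; rewrite !inE HY.
case Hx: (x \in Y); last by rewrite andbF.
rewrite /=.
apply/idP/idP.
- move=> C.
  have wA : w \in A.
    have := @closed_connect _ [rel a b | [&& a \in X, b \in X & adjacent a b]] A.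
    move=> /(_ _ (val x) w C) <-; first exact: (valP x).
    move=> a b /= /and3P[aX bX _].
    by rewrite (XA _ aX) (XA _ bX).
  rewrite wA /=.
  move: C => /connectP[p Hp Hw]; apply/connectP.
  exists (map (insubd x) p).
    rewrite -{1}(valKd x x); apply: homo_path Hp.
    move=> a b /= /and3P[aX bX ab].
    have aA := XA _ aX; have bA := XA _ bX.
    by rewrite -!HY !insubdK // aX bX /adjacent /= !insubdK.
  by rewrite -[in X in last X _](valKd x x) last_map -Hw.
- move=> /andP[wA C].
  move: C => /connectP[p Hp Hw]; apply/connectP.
  exists (map val p).
    apply: homo_path Hp.
    move=> a b /= /and3P[aX bX ab].
    by rewrite !HY aX bX.
  by rewrite last_map -Hw insubdK.
Qed.

Definition isl (T1 T2 : Type) (z : T1 + T2) : bool := if z is inl _ then true else false.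

Definition rho_gen (G : digraph) (A : {set vert G}) (T1 T2 : Type) (d : T1)
  (f1 : vert (subG A) -> T1) (f2 : vert (subG (~: A)) -> T2) (v : vert G) : T1 + T2 :=
  match (insub v : option (vert (subG A))) with
  | Some x => inl (f1 x)
  | None => match (insub v : option (vert (subG (~: A)))) with
            | Some y => inr (f2 y)
            | None => inl d end end.

Lemma rho_genE1 G A T1 T2 d f1 f2 (x : vert (subG A)) :
  @rho_gen G A T1 T2 d f1 f2 (val x) = inl (f1 x).
Proof. by rewrite /rho_gen valK. Qed.

Lemma rho_genE2 G A T1 T2 d f1 f2 (y : vert (subG (~: A))) :
  @rho_gen G A T1 T2 d f1 f2 (val y) = inr (f2 y).
Proof.
rewrite /rho_gen insubF ?valK //.
by have := valP y; rewrite inE => /negbTE.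
Qed.

Lemma isl_rho G A T1 T2 d f1 f2 v :
  isl (@rho_gen G A T1 T2 d f1 f2 v) = (v \in A).
Proof.
case vA: (v \in A).
  by have [x ->] := exsub vA; rewrite rho_genE1.
have vB : v \in ~: A by rewrite inE vA.
by have [y ->] := exsub vB; rewrite rho_genE2.
Qed.

Definition Aof (G H1 H2 : digraph) (xi : vert G -> vert H1 + vert H2) : {set vert G} :=
  [set v | isl (xi v)].

Definition xi1 (G H1 H2 : digraph) (r : vert H1) (A : {set vert G})
  (xi : vert G -> vert H1 + vert H2) (x : vert (subG A)) : vert H1 :=
  if xi (val x) is inl a then a else r.
Definition xi2 (G H1 H2 : digraph) (r : vert H2) (A : {set vert G})
  (xi : vert G -> vert H1 + vert H2) (x : vert (subG A)) : vert H2 :=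
  if xi (val x) is inr a then a else r.

Lemma xi1E G H1 H2 r (xi : vert G -> vert H1 + vert H2) (x : vert (subG (Aof xi))) :
  xi (val x) = inl (xi1 r xi x).
Proof. by have := valP x; rewrite inE /xi1; case: (xi (val x)). Qed.
Lemma xi2E G H1 H2 r (xi : vert G -> vert H1 + vert H2) (x : vert (subG (~: Aof xi))) :
  xi (val x) = inr (xi2 r xi x).
Proof. by have := valP x; rewrite !inE /xi2; case: (xi (val x)). Qed.

Definition rprops (G R S : digraph) (rho : (vert G -> vert R) -> (vert G -> vert S)) :=
  [/\ forall xi, is_hom G R xi -> is_hom G S (rho xi),
      forall xi1 xi2, is_hom G R xi1 -> is_hom G R xi2 ->
        rho xi1 =1 rho xi2 -> xi1 =1 xi2
    & forall xi, is_hom G R xi -> forall v, Gamma (rho xi) v = Gamma xi v].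

Lemma choose_rho (R S : digraph) (s : vert S) : sqsubGamma R S ->
  forall G : digraph, { rho : (vert G -> vert R) -> (vert G -> vert S) |
     is_poset G -> rprops rho }.
Proof.
move=> H G; apply: constructive_indefinite_description.
case: (classic (is_poset G)) => P.
  by have [rho Hr] := H G P; exists rho.
by exists (fun _ _ => s).
Qed.

Lemma xi1E' G H1 H2 r A (xi : vert G -> vert H1 + vert H2) (x : vert (subG A)) :
  A = Aof xi -> xi (val x) = inl (xi1 r xi x).
Proof. move=> EA; have : val x \in Aof xi by rewrite -EA; exact: valP x.
by rewrite inE /xi1; case: (xi (val x)). Qed.
Lemma xi2E' G H1 H2 r B (xi : vert G -> vert H1 + vert H2) (x : vert (subG B)) :
  B = ~: Aof xi -> xi (val x) = inr (xi2 r xi x).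
Proof. move=> EB; have : val x \in ~: Aof xi by rewrite -EB; exact: valP x.
by rewrite !inE /xi2; case: (xi (val x)). Qed.

Lemma hom1 (G H1 H2 : digraph) r A (xi : vert G -> vert H1 + vert H2) :
  A = Aof xi -> is_hom G (ordsum H1 H2) xi -> is_hom (subG A) H1 (xi1 r xi).
Proof.
move=> EA Hx x y Hxy; have := Hx _ _ Hxy.
by rewrite /= (xi1E' r x EA) (xi1E' r y EA).
Qed.
Lemma hom2 (G H1 H2 : digraph) r B (xi : vert G -> vert H1 + vert H2) :
  B = ~: Aof xi -> is_hom G (ordsum H1 H2) xi -> is_hom (subG B) H2 (xi2 r xi).
Proof.
move=> EB Hx x y Hxy; have := Hx _ _ Hxy.
by rewrite /= (xi2E' r x EB) (xi2E' r y EB).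
Qed.

Theorem corollary8 (R1 R2 S1 S2 : digraph) :
  is_poset R1 -> is_poset R2 -> is_poset S1 -> is_poset S2 ->
  sqsubGamma R1 S1 -> sqsubGamma R2 S2 ->
  sqsubGamma (ordsum R1 R2) (ordsum S1 S2).
Proof.
move=> [/card_gt0P [r1 _] _ _ _] [/card_gt0P [r2 _] _ _ _].
move=> [/card_gt0P [s1 _] _ _ _] [/card_gt0P [s2 _] _ _ _] H1 H2 G PG.
pose C1 := choose_rho s1 H1; pose C2 := choose_rho s2 H2.
pose F1 (A : {set vert G}) := sval (C1 (subG A)).
pose F2 (A : {set vert G}) := sval (C2 (subG A)).
have prop1 A (x : vert (subG A)) : rprops (F1 A) := svalP (C1 (subG A)) (subG_poset x PG).
have prop2 A (x : vert (subG A)) : rprops (F2 A) := svalP (C2 (subG A)) (subG_poset x PG).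
pose rho (xi : vert G -> vert (ordsum R1 R2)) : vert G -> vert (ordsum S1 S2) :=
  rho_gen s1 (F1 (@Aof G R1 R2 xi) (xi1 r1 xi)) (F2 (~: @Aof G R1 R2 xi) (xi2 r2 xi)).
have Hi xi v : isl (rho xi v) = (v \in @Aof G R1 R2 xi) by apply: isl_rho.
exists rho; split.
- move=> xi Hxi v w Hvw.
  case vA: (v \in Aof xi); case wA: (w \in Aof xi).
  + have [x ?] := exsub vA; have [y ?] := exsub wA; subst v w.
    rewrite /rho !rho_genE1 /=.
    have [Hh _ _] := prop1 _ x; exact: (Hh _ (hom1 r1 (erefl _) Hxi) x y Hvw).
  + have wB : w \in ~: Aof xi by rewrite inE wA.
    have [x ?] := exsub vA; have [y ?] := exsub wB; subst v w.
    by rewrite /rho rho_genE1 rho_genE2.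
  + have vB : v \in ~: Aof xi by rewrite inE vA.
    have [x Ex] := exsub vB; have [y Ey] := exsub wA.
    have := Hxi _ _ Hvw.
    by rewrite Ex Ey (xi2E' r2 x (erefl _)) (xi1E' r1 y (erefl _)).
  + have vB : v \in ~: Aof xi by rewrite inE vA.
    have wB : w \in ~: Aof xi by rewrite inE wA.
    have [x ?] := exsub vB; have [y ?] := exsub wB; subst v w.
    rewrite /rho !rho_genE2 /=.
    have [Hh _ _] := prop2 _ x; exact: (Hh _ (hom2 r2 (erefl _) Hxi) x y Hvw).
- move=> xi xi' Hxi Hxi' Heq v.
  have EA : Aof xi = Aof xi' by apply/setP => u; rewrite -!Hi Heq.
  move: Heq; rewrite /rho -EA => Heq.
  case vA: (v \in Aof xi).
  + have [x ->] := exsub vA.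
    have E1 : F1 (Aof xi) (xi1 r1 xi) =1 F1 (Aof xi) (xi1 r1 xi').
      by move=> y; have := Heq (val y); rewrite !rho_genE1 => -[].
    have [_ Hinj _] := prop1 _ x.
    have := Hinj _ _ (hom1 r1 (erefl _) Hxi) (hom1 r1 EA Hxi') E1 x.
    by rewrite (xi1E' r1 x (erefl _)) (xi1E' r1 x EA) => ->.
  + have vB : v \in ~: Aof xi by rewrite inE vA.
    have EB : ~: Aof xi = ~: Aof xi' by rewrite EA.
    have [x ->] := exsub vB.
    have E2 : F2 (~: Aof xi) (xi2 r2 xi) =1 F2 (~: Aof xi) (xi2 r2 xi').
      by move=> y; have := Heq (val y); rewrite !rho_genE2 => -[].
    have [_ Hinj _] := prop2 _ x.
    have := Hinj _ _ (hom2 r2 (erefl _) Hxi) (hom2 r2 EB Hxi') E2 x.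
    by rewrite (xi2E' r2 x (erefl _)) (xi2E' r2 x EB) => ->.
- move=> xi Hxi v; apply/setP => w.
  case vA: (v \in Aof xi).
  + have [x ->] := exsub vA.
    pose f := F1 (Aof xi) (xi1 r1 xi).
    have XA : [set u | rho xi u == rho xi (val x)] \subset Aof xi.
      by apply/subsetP => u; rewrite inE => /eqP E; rewrite -Hi E /rho rho_genE1.
    have HY : forall y : vert (subG (Aof xi)),
        (val y \in [set u | rho xi u == rho xi (val x)]) = (y \in [set y | f y == f x]).
      by move=> y; rewrite !inE /rho !rho_genE1; apply/eqP/eqP => [[]|E] //; congr (_ _); exact: E.
    have XA' : [set u | xi u == xi (val x)] \subset Aof xi.
      apply/subsetP => u; rewrite inE => /eqP E.
      by rewrite inE E (xi1E' r1 x (erefl _)).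
    have HY' : forall y : vert (subG (Aof xi)),
        (val y \in [set u | xi u == xi (val x)]) =
        (y \in [set y | xi1 r1 xi y == xi1 r1 xi x]).
      by move=> y; rewrite !inE !(xi1E' r1 _ (erefl _)); apply/eqP/eqP => [[]|E] //; congr (_ _); exact: E.
    rewrite /Gamma (gamma_sub x XA HY) (gamma_sub x XA' HY').
    have [_ _ HG] := prop1 _ x.
    by have := HG _ (hom1 r1 (erefl _) Hxi) x; rewrite /Gamma => ->.
  + have vB : v \in ~: Aof xi by rewrite inE vA.
    have [x ->] := exsub vB.
    pose f := F2 (~: Aof xi) (xi2 r2 xi).
    have XA : [set u | rho xi u == rho xi (val x)] \subset ~: Aof xi.
      apply/subsetP => u; rewrite inE => /eqP E; rewrite inE -Hi E /rho.
      by rewrite rho_genE2.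
    have HY : forall y : vert (subG (~: Aof xi)),
        (val y \in [set u | rho xi u == rho xi (val x)]) = (y \in [set y | f y == f x]).
      by move=> y; rewrite !inE /rho !rho_genE2; apply/eqP/eqP => [[]|E] //; congr (_ _); exact: E.
    have XA' : [set u | xi u == xi (val x)] \subset ~: Aof xi.
      apply/subsetP => u; rewrite inE => /eqP E.
      by rewrite !inE E (xi2E' r2 x (erefl _)).
    have HY' : forall y : vert (subG (~: Aof xi)),
        (val y \in [set u | xi u == xi (val x)]) =
        (y \in [set y | xi2 r2 xi y == xi2 r2 xi x]).
      by move=> y; rewrite !inE !(xi2E' r2 _ (erefl _)); apply/eqP/eqP => [[]|E] //; congr (_ _); exact: E.
    rewrite /Gamma (gamma_sub x XA HY) (gamma_sub x XA' HY').
    have [_ _ HG] := prop2 _ x.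
    by have := HG _ (hom2 r2 (erefl _) Hxi) x; rewrite /Gamma => ->.
Qed.
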